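(* Let $(v,b)$ satisfy (C1), with associated pair $(\lambda,\varepsilon)$ (so $\varepsilon\in\{\pm1,\pm2\}$). Then every TS$(v;b)$ $(V,\mathcal F)$ satisfies $$\sum_{\{x,y\}\in\binom V2}\lambda_{x,y}^2\ \ge\ \binom v2\lambda^2+2\varepsilon\lambda+2+|\varepsilon|,$$ and equality holds for any TS$(v;b)$ satisfying one of: (i) all $\lambda_{x,y}\in\{\lambda-1,\lambda,\lambda+1\}$, and with $D_1=\{\{x,y\}:\lambda_{x,y}=\lambda+1\}$, $D_{-1}=\{\{x,y\}:\lambda_{x,y}=\lambda-1\}$ we have $(|D_1|,|D_{-1}|)=(1+\varepsilon,1)$ if $\varepsilon\in\{1,2\}$ and $(|D_1|,|D_{-1}|)=(1,1-\varepsilon)$ if $\varepsilon\in\{-1,-2\}$; or (ii) $\varepsilon\in\{\pm2\}$ and $\lambda_{x,y}=\lambda$ for all pairs except exactly one pair, for which $\lambda_{x,y}=\lambda+\varepsilon$.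
   Context: A triple system TS$(v;b)$ is a pair $(V,\mathcal F)$ where $V$ is a set of $v\ge 3$ points and $\mathcal F$ is a multiset of $b$ 3-subsets of $V$ (blocks); repeated blocks allowed. $\lambda_{x,y}$ is the number of blocks (with multiplicity) containing $\{x,y\}$. The associated pair $(\lambda,\varepsilon)$ of $(v,b)$: integers with $3b=\lambda\binom v2+\varepsilon$, $-v/2<\varepsilon<v/2$. (C1): $v\equiv 2\pmod 3$ and $b\in\{\lfloor \lambda v(v-1)/6\rfloor,\lceil \lambda v(v-1)/6\rceil\}$ for an integer $\lambda$ with $\lambda\equiv1,2\pmod 3$ if $v\equiv5\pmod6$ and $\lambda\equiv 2,4\pmod 6$ if $v\equiv2\pmod 6$; this $\lambda$ is the $\lambda$ of the associated pair. *)

(* Defs.v *)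
From mathcomp Require Import all_boot all_order all_algebra.
Set Implicit Arguments. Unset Strict Implicit. Unset Printing Implicit Defensive.
Import Order.TTheory GRing.Theory Num.Theory.
Local Open Scope ring_scope.

(* A triple system TS(v;b) on the point set 'I_v: a multiset (sequence) of
   b blocks, each a 3-subset of 'I_v; repeated blocks allowed. *)
Definition is_TS (v b : nat) (F : seq {set 'I_v}) : Prop :=
  size F = b /\ all (fun B : {set 'I_v} => #|B| == 3)%N F.

Definition pair_lambda (v : nat) (F : seq {set 'I_v}) (P : {set 'I_v}) : nat :=
  count (fun B : {set 'I_v} => P \subset B) F.

Definition sum_sq_lambda (v : nat) (F : seq {set 'I_v}) : int :=
  \sum_(P : {set 'I_v} | #|P| == 2%N) ((pair_lambda F P)%:Z ^+ 2).

Definition floor6 (x : int) : int := (x %/ 6)%Z.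
Definition ceil6 (x : int) : int := - ((- x) %/ 6)%Z.

Definition assoc_pair (v b : nat) (lam eps : int) : Prop :=
  (3 * b)%:Z = lam * ('C(v, 2))%:Z + eps /\
  - (v%:Z) < 2 * eps /\ 2 * eps < v%:Z.

Definition C1 (v b : nat) (lam : int) : Prop :=
  (v %% 3 = 2)%N /\
  (b%:Z = floor6 (lam * (v * (v - 1))%:Z) \/ b%:Z = ceil6 (lam * (v * (v - 1))%:Z)) /\
  ((v %% 6 = 5)%N -> ((lam %% 3)%Z = 1 \/ (lam %% 3)%Z = 2)) /\
  ((v %% 6 = 2)%N -> ((lam %% 6)%Z = 2 \/ (lam %% 6)%Z = 4)).

Definition D_card (v : nat) (F : seq {set 'I_v}) (t : int) : nat :=
  #|[set P : {set 'I_v} | (#|P| == 2%N) && ((pair_lambda F P)%:Z == t)]|.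

Definition cond_i (v : nat) (F : seq {set 'I_v}) (lam eps : int) : Prop :=
  (forall P : {set 'I_v}, #|P| = 2%N ->
     let l := (pair_lambda F P)%:Z in l = lam - 1 \/ l = lam \/ l = lam + 1) /\
  ((eps = 1 \/ eps = 2) ->
     (D_card F (lam + 1))%:Z = 1 + eps /\ D_card F (lam - 1) = 1%N) /\
  ((eps = -1 \/ eps = -2) ->
     D_card F (lam + 1) = 1%N /\ (D_card F (lam - 1))%:Z = 1 - eps).

Definition cond_ii (v : nat) (F : seq {set 'I_v}) (lam eps : int) : Prop :=
  (eps = 2 \/ eps = -2) /\
  exists P0 : {set 'I_v}, #|P0| = 2%N /\ (pair_lambda F P0)%:Z = lam + eps /\
    forall P : {set 'I_v}, #|P| = 2%N -> P != P0 -> (pair_lambda F P)%:Z = lam.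

(* Main.v *)
Require Import Defs.
From mathcomp Require Import all_boot all_order all_algebra zify ring.
Import Order.TTheory GRing.Theory Num.Theory.

Section Comb.
Variable T : finType.

Lemma sum_sub2 (B : {set T}) :
  (\sum_(P : {set T} | #|P| == 2) (P \subset B : nat) = 'C(#|B|, 2))%N.
Proof.
transitivity (\sum_(P : {set T} | (#|P| == 2) && (P \subset B)) 1)%N.
  by rewrite [RHS]big_mkcondr; apply: eq_bigr => P _; case: (P \subset B).
rewrite sum1_card -cards_draws; apply: eq_card => A.
by rewrite !inE andbC.
Qed.

Lemma card_pairs_x (S : {set T}) x : x \in S ->
  #|[set P : {set T} | P \subset S & (#|P| == 2) && (x \in P)]| = #|S|.-1.
Proof.
move=> xS.
have H := cardsID [set P : {set T} | x \in P] [set P : {set T} | P \subset S & #|P| == 2].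
have E1 : [set P : {set T} | P \subset S & #|P| == 2] :&: [set P : {set T} | x \in P]
   = [set P : {set T} | P \subset S & (#|P| == 2) && (x \in P)].
  by apply/setP => P; rewrite !inE andbA.
have E2 : [set P : {set T} | P \subset S & #|P| == 2] :\: [set P : {set T} | x \in P]
   = [set P : {set T} | P \subset S :\ x & #|P| == 2].
  by apply/setP => P; rewrite !inE subsetD1; case: (x \in P); rewrite ?andbF ?andbT //= andbC.
rewrite E1 E2 !cards_draws in H.
have h := cardsD1 x S; rewrite xS add1n in h.
rewrite h binS bin1 /= in H *. lia.
Qed.

Lemma sub_pair_x (B : {set T}) x :
  (\sum_(P : {set T} | (#|P| == 2) && (x \in P)) (P \subset B : nat) =
   if x \in B then #|B|.-1 else 0)%N.
Proof.
transitivity (\sum_(P : {set T} | ((#|P| == 2) && (x \in P)) && (P \subset B)) 1)%N.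
  by rewrite [RHS]big_mkcondr; apply: eq_bigr => P _; case: (P \subset B).
case: ifP => xB.
  rewrite sum1_card -(@card_pairs_x B x xB); apply: eq_card => A; rewrite !inE -topredE /=.
  by rewrite andbC.
apply: big_pred0 => A; apply/negP => /andP [/andP [_ xA] sAB].
by move/subsetP: sAB => /(_ x xA); rewrite xB.
Qed.


Lemma graph_odd (E : {set {set T}}) :
  (forall P, P \in E -> #|P| = 2) -> (#|E| = 1 \/ #|E| = 2) ->
  exists x, #|[set P in E | x \in P]| = 1.
Proof.
move=> E2 hE.
have : (0 < #|E|)%N by case: hE => ->.
case/card_gt0P => P0 P0E.
have /eqP/cards2P [x [y [xy P0xy]]] := E2 _ P0E.
have one : forall z, z \in P0 -> (forall P, P \in E -> P != P0 -> z \notin P) ->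
   #|[set P in E | z \in P]| = 1.
  move=> z zP0 H; apply/eqP/cards1P; exists P0; apply/setP => P; rewrite !inE.
  case: (eqVneq P P0) => [->|ne]; first by rewrite P0E zP0.
  by case PE: (P \in E) => //=; apply/negbTE/H.
case: hE => hE.
  exists x; apply: one; first by rewrite P0xy !inE eqxx.
  move=> P PE ne; move/eqP/cards1P: hE => [Q EQ].
  by move: PE P0E ne; rewrite EQ !inE => /eqP -> /eqP ->; rewrite eqxx.
move/eqP/cards2P: hE => [Q1 [Q2 [ne12 EQ]]].
have [P1 [P1E P1ne HP]] : exists P1, [/\ P1 \in E, P1 != P0 & forall P, P \in E -> P != P0 -> P = P1].
  move: P0E; rewrite EQ !inE => /orP [] /eqP ->.
    by exists Q2; rewrite !inE eqxx orbT eq_sym ne12; split=> // P; rewrite !inE => /orP [] /eqP -> //; rewrite eqxx.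
  by exists Q1; rewrite !inE eqxx ne12; split=> // P; rewrite !inE => /orP [] /eqP -> //; rewrite eqxx.
case xP1: (x \in P1).
  case yP1: (y \in P1).
    exfalso; move/negP: P1ne; apply; rewrite eq_sym eqEcard P0xy (E2 _ P1E) cards2 xy leqnn andbT.
    by apply/subsetP => z; rewrite !inE => /orP [] /eqP ->.
  exists y; apply: one; first by rewrite P0xy !inE eqxx orbT.
  by move=> P PE ne; rewrite (HP P PE ne) yP1.
exists x; apply: one; first by rewrite P0xy !inE eqxx.
by move=> P PE ne; rewrite (HP P PE ne) xP1.
Qed.

End Comb.

Lemma sum_lam v (F : seq {set 'I_v}) : all (fun B : {set 'I_v} => #|B| == 3) F ->
  (\sum_(P : {set 'I_v} | #|P| == 2) pair_lambda F P = 3 * size F)%N.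
Proof.
elim: F => [|B F IH] /=.
  by move=> _; rewrite big1.
case/andP => /eqP B3 /IH {}IH.
rewrite /pair_lambda /= big_split /= -/(pair_lambda _ _) IH sum_sub2 B3 mulnS.
by [].
Qed.

Lemma deg_lam v (F : seq {set 'I_v}) x : all (fun B : {set 'I_v} => #|B| == 3) F ->
  (\sum_(P : {set 'I_v} | (#|P| == 2) && (x \in P)) pair_lambda F P
     = 2 * count (fun B : {set 'I_v} => x \in B) F)%N.
Proof.
elim: F => [|B F IH] /=.
  by move=> _; rewrite big1.
case/andP => /eqP B3 /IH {}IH.
rewrite /pair_lambda /= big_split /= -/(pair_lambda _ _) IH sub_pair_x B3.
by case: (x \in B) => /=; rewrite ?mulnDr.
Qed.

Local Open Scope ring_scope.
Lemma arith (v b : nat) (lam eps : int) : (3 <= v)%N -> C1 v b lam ->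
  (3 * b)%:Z = lam * ('C(v, 2))%:Z + eps ->
  (eps = 1 \/ eps = 2 \/ eps = -1 \/ eps = -2) /\ exists k : int, (v.-1)%:Z * lam = 2 * k.
Proof.
move=> v3 [v32 [hb [h5 h2]]] he.
have hN : (v * (v - 1) = 2 * 'C(v, 2))%N by rewrite -mul_bin_diag bin1 subn1.
have [n hn] : exists n, 'C(v, 2) = (3 * n + 1)%N.
  exists ('C(v,2) %/ 3)%N.
  have [a ha] : exists a, v = (3 * a + 2)%N by exists (v %/ 3)%N; lia.
  have : (2 * 'C(v,2) = 9 * (a * a + a) + 2)%N by rewrite -hN ha; nia.
  lia.
have eX : lam * ('C(v,2))%:Z = 3 * (lam * n%:Z) + lam by rewrite hn; rewrite PoszD PoszM; ring.
have eM : lam * (v * (v - 1))%:Z = 2 * (lam * ('C(v,2))%:Z) by rewrite hN PoszM; ring.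
rewrite /floor6 /ceil6 eM in hb.
have l3 : (lam %% 3)%Z = 1 \/ (lam %% 3)%Z = 2.
  have : (v %% 6 = 5 \/ v %% 6 = 2)%N by lia.
  case=> h; [exact: h5 | move: (h2 h); lia].
split.
  rewrite eX in he; lia.
have : (v %% 6 = 5 \/ v %% 6 = 2)%N by lia.
case=> h.
  exists ((v.-1 %/ 2)%N%:Z * lam).
  have h' : (v.-1 = 2 * (v.-1 %/ 2))%N by lia.
  by rewrite {1}h' PoszM mulrA.
exists ((v.-1)%:Z * (lam %/ 2)%Z).
have h' : lam = 2 * (lam %/ 2)%Z by move: (h2 h); lia.
by rewrite {1}h' mulrCA.
Qed.
Lemma PoszS (I : Type) (r : seq I) (p : pred I) (f : I -> nat) :
  (\sum_(i <- r | p i) f i)%N%:Z = \sum_(i <- r | p i) (f i)%:Z.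
Proof. by apply: (big_morph Posz PoszD). Qed.

Lemma sum_const_pairs v (c : int) :
  \sum_(P : {set 'I_v} | #|P| == 2%N) c = ('C(v, 2))%:Z * c.
Proof.
rewrite (eq_bigl (fun P => P \in [set P : {set 'I_v} | #|P| == 2%N])); last by move=> P; rewrite inE.
by rewrite sumr_const card_draws card_ord -mulr_natl natz.
Qed.

Lemma sq_expand v (f : {set 'I_v} -> int) (lam : int) :
  \sum_(P : {set 'I_v} | #|P| == 2%N) f P ^+ 2 =
  ('C(v, 2))%:Z * lam ^+ 2 + 2 * lam * \sum_(P : {set 'I_v} | #|P| == 2%N) (f P - lam)
   + \sum_(P : {set 'I_v} | #|P| == 2%N) (f P - lam) ^+ 2.
Proof.
rewrite -sum_const_pairs mulr_sumr -!big_split /=; apply: eq_bigr => P _; ring.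
Qed.

Lemma sum_ind (T : finType) (p q : pred T) :
  \sum_(P | p P) (if q P then 1 else 0 : int) = (#|[set P | p P && q P]|)%:Z.
Proof.
rewrite -big_mkcondr (eq_bigl (fun P => P \in [set P | p P && q P])); last by move=> P; rewrite inE.
by rewrite sumr_const -mulr_natl natz mulr1.
Qed.

Lemma sum_two_val (T : finType) (p : pred T) (m : T -> int) (s : int) :
  (forall P, p P -> m P = 0 \/ m P = s) ->
  \sum_(P | p P) m P = s * (#|[set P | p P && (m P == s)]|)%:Z.
Proof.
move=> h; rewrite (eq_bigr (fun P => s * (if m P == s then 1 else 0))); last first.
  move=> P pP; case: eqP => [->|ne]; first by rewrite mulr1.
  by case: (h P pP) => // ->; rewrite mulr0.
by rewrite -mulr_sumr sum_ind.
Qed.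

Theorem lemma2p1 (v b : nat) (lam eps : int) :
  (3 <= v)%N -> C1 v b lam -> assoc_pair v b lam eps ->
  (forall F : seq {set 'I_v}, is_TS b F ->
     ('C(v, 2))%:Z * lam ^+ 2 + 2 * eps * lam + 2 + `|eps| <= sum_sq_lambda F) /\
  (forall F : seq {set 'I_v}, is_TS b F ->
     cond_i F lam eps \/ cond_ii F lam eps ->
     sum_sq_lambda F = ('C(v, 2))%:Z * lam ^+ 2 + 2 * eps * lam + 2 + `|eps|).
Proof.
move=> v3 hC [he _].
have [heps [k hk]] := @arith v b lam eps v3 hC he.
have key : forall F : seq {set 'I_v}, is_TS b F ->
    \sum_(P : {set 'I_v} | #|P| == 2%N) ((pair_lambda F P)%:Z - lam) = eps.
  move=> F [sF aF]; rewrite sumrB sum_const_pairs -PoszS sum_lam // sF he; ring.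
have expand : forall F : seq {set 'I_v}, is_TS b F ->
    sum_sq_lambda F = ('C(v, 2))%:Z * lam ^+ 2 + 2 * eps * lam +
      \sum_(P : {set 'I_v} | #|P| == 2%N) ((pair_lambda F P)%:Z - lam) ^+ 2.
  by move=> F hF; rewrite /sum_sq_lambda (sq_expand _ _ lam) key //; ring.
split.
  move=> F hF; rewrite expand //.
  have km := key F hF; have [sF aF] := hF.
  set m := fun P : {set 'I_v} => (pair_lambda F P)%:Z - lam.
  rewrite -/m in km *.
  suff H : 2 + `|eps| <= \sum_(P : {set 'I_v} | #|P| == 2%N) m P ^+ 2.
    by rewrite -!addrA lerD2l lerD2l.
  have [s [hs1 hs2]] : exists s : int, (s = 1 \/ s = -1) /\ s * eps = `|eps|.
    by case: heps => [->|[->|[->|->]]]; [exists 1|exists 1|exists (-1)|exists (-1)]; split; lia.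
  have hdiff : \sum_(P : {set 'I_v} | #|P| == 2%N) m P ^+ 2 - `|eps| =
      \sum_(P : {set 'I_v} | #|P| == 2%N) (m P ^+ 2 - s * m P).
    by rewrite sumrB -mulr_sumr km hs2.
  case: (boolP [exists P : {set 'I_v}, [&& #|P| == 2%N, m P != 0 & m P != s]]).
    case/existsP => P0 /and3P [p0 /eqP n0 /eqP ns].
    have t0 : 2 <= m P0 ^+ 2 - s * m P0.
      rewrite expr2; case: hs1 => hs; rewrite hs in ns *.
        have : (2 <= m P0) \/ (m P0 <= -1) by lia.
        case=> h; nia.
      have : (1 <= m P0) \/ (m P0 <= -2) by lia.
      case=> h; nia.
    have t1 : 0 <= \sum_(P : {set 'I_v} | (#|P| == 2%N) && (P != P0)) (m P ^+ 2 - s * m P).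
      by apply: sumr_ge0 => P _; rewrite expr2; case: hs1 => ->; nia.
    rewrite [in RHS](bigD1 P0) //= in hdiff.
    have h2 : 2 + 0 <= \sum_(P : {set 'I_v} | #|P| == 2%N) m P ^+ 2 - `|eps| by rewrite hdiff; exact: lerD t0 t1.
    lia.
  rewrite negb_exists => /forallP hall'.
  have hall : forall P : {set 'I_v}, #|P| == 2%N -> m P = 0 \/ m P = s.
    move=> P p2; move: (hall' P); rewrite p2 /=.
    by case: (eqVneq (m P) 0) => [->|_] /=; [left|rewrite negbK => /eqP; right].
  exfalso.
  pose E := [set P : {set 'I_v} | (#|P| == 2%N) && (m P == s)].
  have hsum := @sum_two_val _ (fun P : {set 'I_v} => #|P| == 2%N) m s hall.
  have hE : eps = s * (#|E|)%:Z by rewrite -km; exact: hsum.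
  have cE : #|E| = 1%N \/ #|E| = 2%N by case: hs1 => hs; rewrite hs in hE; lia.
  have E2 : forall P, P \in E -> #|P| = 2%N by move=> P; rewrite inE => /andP [/eqP].
  have [x hx] := @graph_odd _ E E2 cE.
  have hdeg : \sum_(P : {set 'I_v} | (#|P| == 2%N) && (x \in P)) m P = s.
    rewrite (@sum_two_val _ (fun P : {set 'I_v} => (#|P|==2%N) && (x \in P)) m s); last first.
      by move=> P /andP [p2 _]; exact: hall.
    suff -> : [set P : {set 'I_v} | ((#|P|==2%N) && (x \in P)) && (m P == s)] = [set P in E | x \in P].
      by rewrite hx mulr1.
    apply/setP => P; rewrite !inE.
    by case: (#|P| == 2%N); case: (x \in P); case: (m P == s).
  have hdeg2 : \sum_(P : {set 'I_v} | (#|P| == 2%N) && (x \in P)) m P =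
      2 * (count (fun B : {set 'I_v} => x \in B) F)%:Z - (v.-1)%:Z * lam.
    rewrite /m sumrB -PoszS deg_lam // PoszM.
    rewrite (eq_bigl (fun P => P \in [set P : {set 'I_v} | P \subset setT & (#|P|==2%N) && (x \in P)])); last first.
      by move=> P; rewrite inE subsetT.
    rewrite sumr_const card_pairs_x ?inE // cardsT card_ord -[lam *+ _]mulr_natl natz; ring.
  rewrite hdeg in hdeg2; case: hs1 => hs; rewrite hs in hdeg2; lia.
move=> F hF hc; rewrite expand //.
set m := fun P : {set 'I_v} => (pair_lambda F P)%:Z - lam.
suff -> : \sum_(P : {set 'I_v} | #|P| == 2%N) m P ^+ 2 = 2 + `|eps| by rewrite !addrA.
case: hc => [[h1 [hp hn]] | [he2 [P0 [c0 [l0 hr]]]]].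
  rewrite (eq_bigr (fun P => (if (pair_lambda F P)%:Z == lam + 1 then 1 else 0) +
                             (if (pair_lambda F P)%:Z == lam - 1 then 1 else 0))); last first.
    move=> P /eqP p2; rewrite /m.
    case: (h1 P p2) => [->|[->|->]].
    - rewrite eqxx (_ : (lam - 1 == lam + 1) = false); last by apply/eqP; lia.
      by rewrite expr2; ring.
    - rewrite (_ : (lam == lam + 1) = false); last by apply/eqP; lia.
      rewrite (_ : (lam == lam - 1) = false); last by apply/eqP; lia.
      by rewrite subrr expr0n.
    - rewrite eqxx (_ : (lam + 1 == lam - 1) = false); last by apply/eqP; lia.
      by rewrite expr2; ring.
  rewrite big_split /= !sum_ind -!/(D_card F _).
  case: heps => [h|[h|[h|h]]].
  - by case: (hp (or_introl h)) => -> ->; rewrite h.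
  - by case: (hp (or_intror h)) => -> ->; rewrite h.
  - by case: (hn (or_introl h)) => -> ->; rewrite h.
  - by case: (hn (or_intror h)) => -> ->; rewrite h.
rewrite (bigD1 P0) ?c0 //= big1; last first.
  by move=> P /andP [/eqP p2 ne]; rewrite /m (hr P p2 ne) subrr expr0n.
by rewrite /m l0 addrAC subrr add0r addr0; case: he2 => ->.
Qed.
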